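(* Let $\epsilon\ge0$ and fix any ordering $e_1,\dots,e_n$ of $V$. Let $S$ be the output of the algorithm that starts with $S=\emptyset$ and, for $i=1,\dots,n$, adds $e_i$ to $S$ if $|S|<k$ and $f(e_i\mid S)\ge\frac{1+\epsilon}{2}\cdot\frac{\mathrm{OPT}}{k}$. Let $\mathcal O$ be a set with $|\mathcal O|\le k$ and $f(\mathcal O)=\mathrm{OPT}$. If $|S\cap\mathcal O|\ge2\epsilon k$, then $f(S)\ge\frac{1+\epsilon}{2}\mathrm{OPT}$.
   Context: $V$ is a finite ground set with $|V|=n$; $f:2^V\to\mathbb{R}_{\ge0}$ is monotone, submodular and normalized; $f(e\mid Y)=f(Y\cup\{e\})-f(Y)$. $k$ is a positive integer and $\mathrm{OPT}=\max\{f(S):S\subseteq V,|S|\le k\}$ (known to the algorithm). *)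

(* Defs.v *)
From HB Require Import structures.
From mathcomp Require Import all_boot all_order all_algebra.
Set Implicit Arguments. Unset Strict Implicit. Unset Printing Implicit Defensive.
Import Order.TTheory GRing.Theory Num.Theory.
Local Open Scope ring_scope.

Section Defs.
Variables (R : realFieldType) (V : finType).

Definition marginal (f : {set V} -> R) (e : V) (Y : {set V}) : R :=
  f (e |: Y) - f Y.

Definition nonneg_fun (f : {set V} -> R) : Prop := forall A, 0 <= f A.
Definition normalized (f : {set V} -> R) : Prop := f set0 = 0.
Definition monotone (f : {set V} -> R) : Prop :=
  forall A B : {set V}, A \subset B -> f A <= f B.
Definition submodular (f : {set V} -> R) : Prop :=
  forall A B : {set V}, f (A :|: B) + f (A :&: B) <= f A + f B.

(* OPT = max { f S : |S| <= k }  (f >= 0 and set0 qualifies, so the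
   big max with default 0 is the true maximum) *)
Definition OPT (f : {set V} -> R) (k : nat) : R :=
  \big[Num.max/0]_(S : {set V} | (#|S| <= k)%N) f S.

Definition thr_step (f : {set V} -> R) (k : nat) (tau : R)
    (S : {set V}) (e : V) : {set V} :=
  if ((#|S| < k)%N) && (tau <= marginal f e S) then e |: S else S.

Definition threshold_alg (f : {set V} -> R) (k : nat) (eps : R)
    (s : seq V) : {set V} :=
  foldl (thr_step f k ((1 + eps) / 2 * (OPT f k / k%:R))) set0 s.

End Defs.

(* Main.v *)
Require Import Defs.
From HB Require Import structures.
From mathcomp Require Import all_boot all_order all_algebra.
From mathcomp Require Import ring lra.
Import Order.TTheory GRing.Theory Num.Theory.
Local Open Scope ring_scope.

Section Helpers.
Variables (R : realFieldType) (V : finType) (f : {set V} -> R) (k : nat) (tau : R).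
Hypothesis mono : monotone f.
Hypothesis subm : submodular f.

Notation step := (thr_step f k tau).

Lemma step_sub (S0 : {set V}) (x : V) : S0 \subset step S0 x.
Proof. rewrite /thr_step; case: ifP => _ //; exact: subsetUr. Qed.

Lemma fold_sub (S0 : {set V}) (s : seq V) : S0 \subset foldl step S0 s.
Proof.
elim: s S0 => [|x s IH] S0 /=; first exact: subxx.
exact: subset_trans (step_sub S0 x) (IH _).
Qed.

Lemma step_val (S0 : {set V}) (x : V) :
  f S0 + tau * (#|step S0 x|)%:R <= f (step S0 x) + tau * (#|S0|)%:R.
Proof.
rewrite /thr_step; case: ifP => [/andP[_ h]|_]; last lra.
move: h; rewrite /marginal cardsU1; case: (x \in S0) => /= h.
  have := mono _ _ (subsetUr [set x] S0); rewrite add0n; lra.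
rewrite add1n -addn1 natrD; lra.
Qed.

Lemma fold_val (S0 : {set V}) (s : seq V) :
  f S0 + tau * (#|foldl step S0 s|)%:R <= f (foldl step S0 s) + tau * (#|S0|)%:R.
Proof.
elim: s S0 => [|x s IH] S0 /=; first lra.
have := IH (step S0 x); have := step_val S0 x; lra.
Qed.

Lemma marg_mono (e : V) (A B : {set V}) : A \subset B -> e \notin B ->
  marginal f e B <= marginal f e A.
Proof.
move=> AB eB; rewrite /marginal.
have := subm (e |: A) B.
have -> : (e |: A) :|: B = e |: B.
  by rewrite -setUA (setUidPr AB).
have -> : (e |: A) :&: B = A.
  apply/setP => y; rewrite !inE; case: eqP => [->|_] /=.
    by rewrite (negbTE eB); apply/esym/negbTE/negP => /(subsetP AB); rewrite (negbTE eB).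
  by case yA: (y \in A) => //=; rewrite (subsetP AB).
lra.
Qed.

Lemma fold_rej (S0 : {set V}) (s : seq V) (e : V) : e \in s -> e \notin foldl step S0 s ->
  (#|foldl step S0 s| < k)%N -> marginal f e (foldl step S0 s) < tau.
Proof.
elim: s S0 => [|x s IH] S0 //=; rewrite inE => /orP[/eqP->|es] eS lt; last exact: IH.
set S := foldl step _ s in eS lt *.
have sub := fold_sub (step S0 x) s.
have sub0 := subset_trans (step_sub S0 x) sub.
case hc: ((#|S0| < k)%N && (tau <= marginal f x S0)).
  have xs : x \in step S0 x by rewrite /thr_step hc setU11.
  by move: eS; rewrite (subsetP sub x xs).
move: hc => /negbT; rewrite negb_and => /orP[hk|]; first last.
  rewrite -ltNge => h; apply: le_lt_trans h; exact: marg_mono.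
by move: hk; rewrite (leq_ltn_trans (subset_leq_card sub0) lt).
Qed.

Lemma union_bound (S : {set V}) (t : seq V) :
  f (S :|: [set x in t]) <= f S + \sum_(e <- t) marginal f e S.
Proof.
elim: t => [|x t IH].
  rewrite big_nil addr0.
  have -> : [set x in [::]] = set0 :> {set V} by apply/setP => y; rewrite !inE.
  by rewrite setU0.
rewrite big_cons.
have -> : S :|: [set y in x :: t] = (x |: S) :|: (S :|: [set y in t]).
  by apply/setP => y; rewrite !inE; case: (y == x); case: (y \in S).
have h1 := subm (x |: S) (S :|: [set y in t]).
have h2 : f S <= f ((x |: S) :&: (S :|: [set y in t])).
  apply: mono; rewrite subsetI subsetUr subsetUl //.
rewrite /marginal; lra.
Qed.

End Helpers.

Theorem mainTheorem12 (R : realFieldType) (V : finType)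
    (f : {set V} -> R) (k : nat) (eps : R) (s : seq V) (O : {set V}) :
  nonneg_fun f -> monotone f -> submodular f -> normalized f ->
  (0 < k)%N -> 0 <= eps ->
  perm_eq s (enum V) ->
  (#|O| <= k)%N -> f O = OPT f k ->
  2 * eps * k%:R <= (#|threshold_alg f k eps s :&: O|)%:R ->
  (1 + eps) / 2 * OPT f k <= f (threshold_alg f k eps s).
Proof.
move=> nn mono subm norm kpos eps0 perm Ok fO hc.
rewrite /threshold_alg -fO in hc *.
set P := f O / k%:R.
set tau := (1 + eps) / 2 * P.
set S := foldl _ set0 s in hc *.
have K0 : 0 < k%:R :> R by rewrite ltr0n.
have fOe : f O = k%:R * P by rewrite /P mulrC divfK // gt_eqF.
have P0 : 0 <= P by rewrite /P divr_ge0 // ?ler0n.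
have tau0 : 0 <= tau by rewrite /tau mulr_ge0 // divr_ge0 //; lra.
rewrite fOe.
case: (leqP k #|S|) => hk.
  have := @fold_val R V f k tau mono set0 s.
  rewrite cards0 norm mulr0 add0r addr0 -/S => h.
  have hk' : k%:R <= (#|S|)%:R :> R by rewrite ler_nat.
  have : tau * k%:R <= tau * (#|S|)%:R by rewrite ler_wpM2l.
  have -> : (1 + eps) / 2 * (k%:R * P) = tau * k%:R by rewrite /tau; ring.
  lra.
have hrej : forall e, e \in enum (O :\: S) -> marginal f e S <= tau.
  move=> e; rewrite mem_enum inE => /andP[eS _].
  apply/ltW/(@fold_rej R V f k tau subm) => //; by rewrite (perm_mem perm) mem_enum.
have hsum : \sum_(e <- enum (O :\: S)) marginal f e S <= (#|O :\: S|)%:R * tau.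
  rewrite cardE -sum1_size natr_sum mulr_suml.
  rewrite big_seq [X in _ <= X]big_seq; apply: ler_sum => e he.
  by rewrite mul1r; apply: hrej.
have hu := @union_bound R V f mono subm S (enum (O :\: S)).
have E : [set x in enum (O :\: S)] = O :\: S by apply/setP => y; rewrite inE mem_enum.
rewrite E in hu.
have hO : f O <= f (S :|: (O :\: S)).
  by apply: mono; rewrite setDE setUIr setUCr setIT subsetUr.
have hcard := cardsID S O.
have hm : ((#|O :\: S|)%:R : R) <= k%:R - 2 * eps * k%:R.
  have : (#|O :&: S| + #|O :\: S| <= k)%N by rewrite hcard.
  rewrite -(ler_nat R) natrD setIC; lra.
move: hO hu; rewrite -/S fOe => hO hu.
set m := (#|O :\: S|)%:R : R in hm hsum.
have h4 : m * ((1 + eps) * P) <= (k%:R - 2 * eps * k%:R) * ((1 + eps) * P).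
  apply: ler_wpM2r => //; apply: mulr_ge0 => //; lra.
have h2 : 0 <= k%:R * P * (eps * eps).
  by apply: mulr_ge0; [apply: mulr_ge0; lra | apply: mulr_ge0].
have h3 : m * tau = m * ((1 + eps) * P) / 2 by rewrite /tau; field.
have e1 : (k%:R - 2 * eps * k%:R) * ((1 + eps) * P) =
  2 * (k%:R * P) - (1 + eps) * (k%:R * P) - 2 * (k%:R * P * (eps * eps)) by ring.
have e2 : (1 + eps) / 2 * (k%:R * P) = ((1 + eps) * (k%:R * P)) / 2 by ring.
rewrite e2; rewrite e1 in h4.
move: h4 h3 h2 hsum hu hO.
generalize (m * ((1 + eps) * P)) (m * tau) (k%:R * P * (eps * eps)) ((1 + eps) * (k%:R * P)) (k%:R * P).
move=> a b c d x; lra.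
Qed.
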